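(* Assume the standing setup. For distinct $i,j\in[k]$, $x_{ij}=0$ if and only if $y_{ij}=0$. Equivalently, $s_j\cdot\alpha_i\neq\alpha_i$ if and only if $s_j\cdot\beta_i\neq\beta_i$, so the associated digraphs of $V_1$ and $V_2$ (vertex set $[k]$, arrow $i\to j$ iff $s_j$ does not fix the chosen reflection vector of $s_i$) coincide.
   Context: Standing setup: $\mathbb{F}$ is a field of characteristic $0$; $W$ is a group with finite generating set $S=\{s_1,\dots,s_k\}$. A linear map on a finite-dimensional space is a (generalized) reflection if it is diagonalizable and $s-\operatorname{Id}$ has rank $1$; a reflection vector is a nonzero vector in $\operatorname{Im}(s-\operatorname{Id})$. $(V_1,\rho_1)$, $(V_2,\rho_2)$ are irreducible reflection representations of $(W,S)$ (each $s_i$ acts by a reflection), both of dimension $n$. For each $i\in[k]$, $\alpha_i\in V_1$ is a chosen reflection vector of $s_i$ with $s_i\alpha_i=\lambda_i\alpha_i$ and $\beta_i\in V_2$ a chosen reflection vector of $s_i$ with $s_i\beta_i=\mu_i\beta_i$. $d$ is an integer with $1\le d\le n-1$, and $\psi:\bigwedge^dV_1\to\bigwedge^dV_2$ is an isomorphism of $W$-modules ($W$ acting diagonally). For distinct $a,b\in[k]$, the scalars $x_{ab},y_{ab}\in\mathbb{F}$ are defined by $s_b\cdot\alpha_a=\alpha_a+x_{ab}\alpha_b$ and $s_b\cdot\beta_a=\beta_a+y_{ab}\beta_b$. *)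

(* Defs.v *)
From HB Require Import structures.
From mathcomp Require Import all_boot all_order all_algebra.
Set Implicit Arguments.
Unset Strict Implicit.
Unset Printing Implicit Defensive.
Import GRing.Theory.
Local Open Scope ring_scope.

(* Vectors of an n-dimensional F-space are column vectors 'cV[F]_n;
   a representation of the group W is a map rho : W -> 'M[F]_n. *)

Definition generates (W : groupType) (k : nat) (s : 'I_k -> W) : Prop :=
  forall P : W -> Prop,
    P 1%g -> (forall a b, P a -> P b -> P (a * b)%g) ->
    (forall a, P a -> P (a^-1)%g) -> (forall i, P (s i)) -> forall g, P g.

Definition is_rep (F : fieldType) (W : groupType) (n : nat)
  (rho : W -> 'M[F]_n) : Prop :=
  rho 1%g = 1%:M /\ forall g h, rho (g * h)%g = rho g *m rho h.

(* Subspaces are row spaces of matrices U; the subspace {u^T | u in <U>}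
   of column vectors is rho-stable iff U *m (rho g)^T <= U. *)
Definition irreducible_rep (F : fieldType) (W : groupType) (n : nat)
  (rho : W -> 'M[F]_n) : Prop :=
  (0 < n)%N /\
  forall U : 'M[F]_n, (forall g, (U *m (rho g)^T <= U)%MS) ->
    U = 0 \/ row_full U.

Definition is_reflection (F : fieldType) (n : nat) (A : 'M[F]_n) : Prop :=
  diagonalizable A /\ \rank (A - 1%:M) = 1%N.

Definition is_reflection_vector (F : fieldType) (n : nat) (A : 'M[F]_n)
  (v : 'cV[F]_n) : Prop :=
  v != 0 /\ exists u : 'cV[F]_n, v = (A - 1%:M) *m u.

(* Basis of /\^d F^n: e_I = e_{i1} /\ ... /\ e_{id} for d-subsets
   I = {i1 < ... < id} of 'I_n. *)
Definition dsub (n d : nat) := {I : {set 'I_n} | #|I| == d}.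
Definition wdim (n d : nat) := #|{: dsub n d}|.

(* the a-th smallest element of I (if any) *)
Definition set_nth (n : nat) (I : {set 'I_n}) (a : nat) : option 'I_n :=
  nth None (map Some (enum I)) a.

Definition submx_IJ (F : fieldType) (n d : nat) (A : 'M[F]_n)
  (I J : {set 'I_n}) : 'M[F]_d :=
  \matrix_(a < d, b < d)
    match set_nth I a, set_nth J b with
    | Some r, Some c => A r c
    | _, _ => 0
    end.

(* d-th compound matrix: the matrix of /\^d A in the basis (e_I)_I *)
Definition exterior_power (F : fieldType) (n d : nat) (A : 'M[F]_n)
  : 'M[F]_(wdim n d) :=
  \matrix_(i, j) \det (submx_IJ d A (val (enum_val i)) (val (enum_val j))).

(* Main.v *)
Require Import Defs.
From HB Require Import structures.
From mathcomp Require Import all_boot all_order all_algebra all_fingroup.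
From mathcomp Require Import zify.
Import GRing.Theory.
Local Open Scope ring_scope.
Set Implicit Arguments. Unset Strict Implicit. Unset Printing Implicit Defensive.

Lemma det_mul_expand (F : comPzRingType) k p (C : 'M[F]_(k,p)) (D : 'M[F]_(p,k)) :
  \det (C *m D) = \sum_(f : {ffun 'I_k -> 'I_p})
     (\prod_i C i (f i)) * \det (\matrix_(i, j) D (f i) j).
Proof.
transitivity (\sum_(s : 'S_k) \sum_(f : {ffun 'I_k -> 'I_p})
   (-1) ^+ s * ((\prod_i C i (f i)) * \prod_i D (f i) (s i))).
  apply: eq_bigr => s _; rewrite -big_distrr /=; congr (_ * _).
  under eq_bigr do rewrite mxE.
  rewrite (bigA_distr_bigA (fun i j => C i j * D j (s i))) /=.
  by apply: eq_bigr => f _; rewrite big_split.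
rewrite exchange_big; apply: eq_bigr => f _ /=.
rewrite /(\det _) big_distrr /=; apply: eq_bigr => s _.
rewrite mulrCA; congr (_ * (_ * _)); apply: eq_bigr => i _; by rewrite mxE.
Qed.


Section CB.
Variable F : fieldType.
Variables n' d' : nat.
Local Notation n := n'.+1.
Local Notation d := d'.+1.

Definition sel (J : {set 'I_n}) (a : 'I_d) : 'I_n := nth ord0 (enum J) a.
Definition rk (J : {set 'I_n}) (x : 'I_n) : 'I_d := inord (index x (enum J)).

Lemma set_nthE (J : {set 'I_n}) (a : 'I_d) : #|J| = d -> Defs.set_nth J a = Some (sel J a).
Proof. by move=> hJ; rewrite /Defs.set_nth (nth_map ord0) // -cardE hJ. Qed.

Lemma sel_in (J : {set 'I_n}) (a : 'I_d) : #|J| = d -> sel J a \in J.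
Proof. by move=> hJ; rewrite -mem_enum mem_nth // -cardE hJ. Qed.

Lemma rk_sel (J : {set 'I_n}) (a : 'I_d) : #|J| = d -> rk J (sel J a) = a.
Proof.
move=> hJ; rewrite /rk /sel index_uniq ?enum_uniq ?inord_val // -cardE hJ; exact: ltn_ord.
Qed.

Lemma sel_rk (J : {set 'I_n}) (x : 'I_n) : #|J| = d -> x \in J -> sel J (rk J x) = x.
Proof.
move=> hJ xJ; rewrite /rk /sel inordK ?nth_index ?mem_enum //.
by rewrite -hJ cardE index_mem mem_enum.
Qed.

Lemma sel_inj (J : {set 'I_n}) : #|J| = d -> injective (sel J).
Proof. by move=> hJ a b e; rewrite -(rk_sel a hJ) e rk_sel. Qed.

Definition rowJ m (D : 'M[F]_(n, m)) J : 'M[F]_(d, m) := \matrix_(a, b) D (sel J a) b.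
Definition colJ m (C : 'M[F]_(m, n)) J : 'M[F]_(m, d) := \matrix_(a, b) C a (sel J b).

Lemma cauchy_binet (C : 'M[F]_(d, n)) (D : 'M[F]_(n, d)) :
  \det (C *m D) = \sum_(J : dsub n d) \det (colJ C (val J)) * \det (rowJ D (val J)).
Proof.
pose T (f : {ffun 'I_d -> 'I_n}) :=
  (\prod_i C i (f i)) * \det (\matrix_(i, j) D (f i) j).
have T0 (f : {ffun 'I_d -> 'I_n}) : ~~ injectiveb f -> T f = 0.
  case/injectivePn=> i1 [i2 Di12 Ef12].
  by rewrite /T (determinant_alternate Di12) ?mulr0 // => j; rewrite !mxE Ef12.
rewrite det_mul_expand -/T.
transitivity (\sum_(J : dsub n d) \sum_(f : {ffun 'I_d -> 'I_n} | [forall i, f i \in val J]) T f); last first.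
  apply: eq_bigr => J _; rewrite -det_mulmx det_mul_expand.
  have hJ : #|val J| = d by apply/eqP; exact: (valP J).
  symmetry; rewrite (reindex (fun g : {ffun 'I_d -> 'I_d} => [ffun i => sel (val J) (g i)])) /=.
    apply: eq_big => [g|g _].
      by symmetry; apply/forallP => i; rewrite ffunE sel_in.
    rewrite /T; congr (_ * _).
      by apply: eq_bigr => i _; rewrite ffunE mxE.
    by congr (\det _); apply/matrixP => i j; rewrite !mxE ffunE.
  exists (fun f : {ffun 'I_d -> 'I_n} => [ffun i => rk (val J) (f i)]) => g.
    by move=> _; apply/ffunP => i; rewrite !ffunE rk_sel.
  by rewrite inE => /forallP Pg; apply/ffunP => i; rewrite !ffunE sel_rk.
under [RHS]eq_bigr do rewrite big_mkcond /=.
rewrite [RHS]exchange_big; apply: eq_bigr => f _; rewrite -/(T f).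
have [->|Tf] := eqVneq (T f) 0.
  by rewrite big1 // => J _; case: ifP.
have /injectiveP inj : injectiveb f.
  by apply: contraT => /T0 /eqP; rewrite (negPf Tf).
have cardJ0 : #|f @: [set: 'I_d]| == d by rewrite card_imset // cardsT card_ord.
pose J0 : dsub n d := exist _ (f @: [set: 'I_d]) cardJ0.
rewrite (bigD1 J0) //= ifT; last by apply/forallP => i; apply: imset_f.
rewrite big1 ?addr0 // => J neJ; case: ifP => // /forallP Pf.
case/eqP: neJ; apply: val_inj => /=; apply/eqP; rewrite eq_sym eqEcard.
rewrite (eqP (valP J)) (eqP cardJ0) leqnn andbT.
by apply/subsetP => x /imsetP [i _ ->].
Qed.


Definition Jx (i : 'I_(wdim n d)) : {set 'I_n} := val (enum_val i).
Lemma cJ i : #|Jx i| = d.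
Proof. by apply/eqP; exact: (valP (enum_val i)). Qed.

Lemma cb_ord (C : 'M[F]_(d, n)) (D : 'M[F]_(n, d)) :
  \det (C *m D) = \sum_(j < wdim n d) \det (colJ C (Jx j)) * \det (rowJ D (Jx j)).
Proof. by rewrite cauchy_binet -(big_enum_val (fun J : dsub n d => \det (colJ C (val J)) * \det (rowJ D (val J)))). Qed.

Definition wv (v : 'M[F]_(n, d)) : 'cV[F]_(wdim n d) := \col_i \det (rowJ v (Jx i)).

Lemma E_entry (M : 'M[F]_n) i j :
  exterior_power d M i j = \det (colJ (rowJ M (Jx i)) (Jx j)).
Proof.
rewrite mxE; congr (\det _); apply/matrixP => a b.
by rewrite !mxE (set_nthE a (cJ i)) (set_nthE b (cJ j)).
Qed.

Lemma rowJ_mul m p (M : 'M[F]_(n, m)) (v : 'M[F]_(m, p)) J :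
  rowJ (M *m v) J = rowJ M J *m v.
Proof. by apply/matrixP => a b; rewrite !mxE; apply: eq_bigr => k _; rewrite mxE. Qed.

Lemma E_wv (M : 'M[F]_n) (v : 'M[F]_(n, d)) :
  exterior_power d M *m wv v = wv (M *m v).
Proof.
apply/matrixP => i k; rewrite !mxE rowJ_mul cb_ord.
by apply: eq_bigr => j _; rewrite E_entry mxE.
Qed.

Lemma E_tr (M : 'M[F]_n) : (exterior_power d M)^T = exterior_power d M^T.
Proof.
apply/matrixP => i j; rewrite mxE !E_entry -det_tr; congr (\det _).
by apply/matrixP => a b; rewrite !mxE.
Qed.

Lemma wv_mulr (v : 'M[F]_(n, d)) (X : 'M[F]_d) : wv (v *m X) = \det X *: wv v.
Proof. by apply/matrixP => i k; rewrite !mxE rowJ_mul det_mulmx mulrC. Qed.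

Lemma wv_pair (u v : 'M[F]_(n, d)) : (wv u)^T *m wv v = (\det (u^T *m v))%:M.
Proof.
apply/matrixP => i k; rewrite (ord1 i) (ord1 k) !mxE /= mulr1n cb_ord.
apply: eq_bigr => j _; rewrite !mxE -det_tr; congr (\det _ * _).
by apply/matrixP => a b; rewrite !mxE.
Qed.


Lemma wv_basis I : exists v, wv v = delta_mx I (0 : 'I_1).
Proof.
exists (\matrix_(r, b) (r == sel (Jx I) b)%:R).
apply/matrixP => j k; rewrite (ord1 k) !mxE eqxx andbT.
have [->|njI] := eqVneq j I.
  rewrite -[RHS](det1 _ d); congr (\det _); apply/matrixP => a b.
  by rewrite !mxE (inj_eq (sel_inj (cJ I))).
have [a aI] : exists a, sel (Jx j) a \notin Jx I.
  apply/existsP; apply: contraR njI; rewrite negb_exists => /forallP hall.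
  have sub : Jx j \subset Jx I.
    apply/subsetP => x xj; rewrite -(sel_rk (cJ j) xj).
    by move: (hall (rk (Jx j) x)); rewrite negbK.
  have eJ : Jx j = Jx I.
    by apply/eqP; rewrite eqEcard sub !cJ leqnn.
  by apply/eqP; apply: enum_val_inj; apply: val_inj.
rewrite (expand_det_row _ a) big1 // => b _; rewrite !mxE.
case: eqP => [e|]; last by rewrite mul0r.
by move: aI; rewrite e sel_in ?cJ.
Qed.

Lemma cV_eq0_pair (w : 'cV[F]_(wdim n d)) :
  (forall v, ((wv v)^T *m w) 0 0 = 0) -> w = 0.
Proof.
move=> h; apply/matrixP => j k; rewrite (ord1 k) mxE.
have [v ev] := wv_basis j; move: (h v); rewrite ev mxE => <-.
rewrite (bigD1 j) //= big1 ?addr0; first by rewrite !mxE !eqxx mul1r.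
by move=> i nij; rewrite !mxE (negPf nij) mul0r.
Qed.


Lemma det_row_mx_lin (x : 'cV[F]_d) (M : 'M[F]_(d, d')) :
  \det (row_mx x M : 'M_d) =
  \sum_i x i 0 * cofactor (row_mx (0 : 'cV_d) M : 'M_d) i (lshift d' (0 : 'I_1)).
Proof.
rewrite (expand_det_col _ (lshift d' (0 : 'I_1))); apply: eq_bigr => i _.
rewrite row_mxEl; congr (_ * _).
rewrite /cofactor col'Kl (thinmx0 (col' 0 x)); congr (_ * \det (row' i _)).
apply/matrixP => a b; rewrite !mxE.
case: splitP => [[] //|j hj]; case: splitP => [j' hj'|j' hj'].
  by move: hj'; rewrite /= /bump /=; case: j' => [[|]].
by congr (M a _); apply: val_inj; move: hj hj'; rewrite /= /bump /= => ->; lia.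
Qed.

Lemma rowJ_row_mx m1 m2 (x : 'M[F]_(n, m1)) (V : 'M[F]_(n, m2)) J :
  rowJ (row_mx x V) J = row_mx (rowJ x J) (rowJ V J).
Proof.
apply/matrixP => a b; rewrite !mxE; case: splitP => j _; by rewrite mxE.
Qed.

Lemma wv_lin c (x y : 'cV[F]_n) (V : 'M[F]_(n, d')) :
  wv (row_mx (c *: x + y) V) = c *: wv (row_mx x V) + wv (row_mx y V).
Proof.
apply/matrixP => i k; rewrite /wv !mxE !(rowJ_row_mx (m1 := 1)) !det_row_mx_lin.
rewrite big_distrr -big_split /=; apply: eq_bigr => j _.
by rewrite !mxE mulrDl mulrA.
Qed.

End CB.


Definition Pprop (F : fieldType) N (X Y : 'M[F]_N) :=
  exists w : 'cV[F]_N, w != 0 /\ (exists u, w = (X - 1%:M) *m u) /\ Y *m w = w.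

Lemma Pprop_transport (F : fieldType) N (Q X1 X2 Y1 Y2 : 'M[F]_N) :
  Q \in unitmx -> Q *m X1 = X2 *m Q -> Q *m Y1 = Y2 *m Q ->
  Pprop X1 Y1 -> Pprop X2 Y2.
Proof.
move=> Qu hX hY [w [wnz [[u hu] hw]]]; exists (Q *m w); split; [|split].
- apply: contraNneq wnz => Qw0.
  by rewrite -(mulKmx Qu w) Qw0 mulmx0.
- exists (Q *m u); rewrite hu mulmxA mulmxBr mulmxBl hX mulmx1.
  by rewrite mulmxBl mul1mx mulmxA.
- by rewrite mulmxA -hY -mulmxA hw.
Qed.

Lemma inv_intertwine (F : fieldType) N (Q X1 X2 : 'M[F]_N) :
  Q \in unitmx -> Q *m X1 = X2 *m Q -> invmx Q *m X2 = X1 *m invmx Q.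
Proof.
move=> Qu h.
rewrite -[X1 *m _]mul1mx -(mulVmx Qu) -!mulmxA (mulmxA Q) h.
by rewrite -!mulmxA mulmxV // mulmx1.
Qed.

Lemma tr11 (F : fieldType) n (p q : 'cV[F]_n) : (p^T *m q) 0 0 = (q^T *m p) 0 0.
Proof. have -> : q^T *m p = (p^T *m q)^T by rewrite trmx_mul trmxK. by rewrite [RHS]mxE. Qed.

Lemma refl_data (F : fieldType) n (A : 'M[F]_n) (a : 'cV[F]_n) (l : F) :
  is_reflection A -> is_reflection_vector A a -> A *m a = l *: a ->
  exists g : 'cV[F]_n, A = 1%:M + a *m g^T /\ (g^T *m a) 0 0 = l - 1 /\ l != 1.
Proof.
move=> [[P Pu Pdiag] rk1] [anz [u0 hu0]] hl.
set N := A - 1%:M in rk1 hu0.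
have sub : (a^T <= N^T)%MS by rewrite hu0 trmx_mul submxMl.
have aT0 : a^T != 0.
  by apply: contra anz => /eqP h; apply/eqP; rewrite -(trmxK a) h trmx0.
have ra : \rank a^T = 1%N by rewrite rank_rV aT0.
have : (N^T <= a^T)%MS by rewrite -(mxrank_leqif_sup sub).2 ra (mxrank_tr N) rk1.
case/submxP => X hX.
have eN : N = a *m X^T by rewrite -[N]trmxK hX trmx_mul trmxK.
have eA : A = 1%:M + a *m X^T by rewrite -eN /N addrC subrK.
exists X.
have hNa : N *m a = ((X^T *m a) 0 0) *: a.
  by rewrite eN -mulmxA {1}[X^T *m a]mx11_scalar mul_mx_scalar.
have hNa' : N *m a = (l - 1) *: a by rewrite /N mulmxBl hl mul1mx scalerBl scale1r.
have egl : (X^T *m a) 0 0 = l - 1.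
  move/eqP: (hNa'); rewrite hNa -subr_eq0 -scalerBl scaler_eq0 (negPf anz) orbF.
  by rewrite subr_eq0 => /eqP.
split; first done; split; first done.
apply/negP => /eqP l1.
have Na0 : N *m a = 0 by rewrite hNa' l1 subrr scale0r.
set D := P *m N *m invmx P.
have eD : D = conjmx P A - 1%:M.
  by rewrite /conjmx pinvmxE // /D /N mulmxBr mulmxBl mulmx1 mulmxV.
have Ddiag : forall i j, i != j -> D i j = 0.
  move=> i j nij; move: Pdiag; rewrite /simmx_to_for => /is_diag_mxP h.
  by move: (h i j nij); rewrite eD !mxE (negPf nij) subr0.
have diagmul (y : 'cV[F]_n) i : (D *m y) i 0 = D i i * y i 0.
  rewrite mxE (bigD1 i) //= big1 ?addr0 // => j nji.
  by rewrite Ddiag ?mul0r // eq_sym.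
have Dz : D *m (P *m u0) = P *m a.
  rewrite /D !mulmxA -(mulmxA _ (invmx P)) mulVmx // mulmx1 -mulmxA -hu0.
  by [].
have DDz : D *m (D *m (P *m u0)) = 0.
  rewrite Dz /D -!mulmxA (mulmxA (invmx P)) mulVmx // mul1mx Na0.
  by rewrite !mulmx0.
clearbody D.
have : D *m (P *m u0) = 0.
  apply/matrixP => i k; rewrite (ord1 k) diagmul !mxE.
  have := congr1 (fun M : 'cV[F]_n => M i 0) DDz; rewrite /= diagmul diagmul !mxE => /eqP.
  by rewrite mulf_eq0 => /orP [/eqP -> | /eqP //]; rewrite mul0r.
rewrite Dz => Pa0; move/negP: anz; apply.
by rewrite -(mulKmx Pu a) Pa0 mulmx0.
Qed.

Section Key.
Variable F : fieldType.
Variables n' d' : nat.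
Local Notation n := n'.+1.
Local Notation d := d'.+1.
Local Notation E := (@exterior_power F n d).

Lemma hEt (M : 'M[F]_n) (v : 'M[F]_(n, d)) : (wv v)^T *m E M = (wv (M^T *m v))^T.
Proof.
have -> : (wv v)^T *m E M = ((E M)^T *m wv v)^T by rewrite trmx_mul trmxK.
by rewrite E_tr E_wv.
Qed.

Lemma key_no (a g b h : 'cV[F]_n) :
  (h^T *m b) 0 0 != 0 -> (h^T *m a) 0 0 != 0 ->
  ~ Pprop (E (1%:M + a *m g^T)) (E (1%:M + b *m h^T)).
Proof.
set A := 1%:M + a *m g^T; set B := 1%:M + b *m h^T.
move=> hb ha [w [wnz [[u hu] hw]]]; move/negP: wnz; apply; apply/eqP.
have step1 (v0 : 'M[F]_(n, d)) : a^T *m v0 = 0 -> (wv v0)^T *m w = 0.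
  move=> hv; rewrite hu mulmxA mulmxBr mulmx1 hEt.
  have -> : A^T *m v0 = v0.
    by rewrite /A raddfD /= trmx1 trmx_mul trmxK mulmxDl mul1mx -mulmxA hv mulmx0 addr0.
  by rewrite subrr mul0mx.
have step2 (v0 : 'M[F]_(n, d)) : (wv (B^T *m v0))^T *m w = (wv v0)^T *m w.
  by rewrite -hEt -mulmxA hw.
have scl (v0 : 'M[F]_(n, d)) X : (wv (v0 *m X))^T *m w = \det X *: ((wv v0)^T *m w).
  by rewrite wv_mulr linearZ /= -scalemxAl.
apply: cV_eq0_pair => v.
suff -> : (wv v)^T *m w = 0 by rewrite mxE.
set r := a^T *m v.
pose X := invmx (row_ebase r).
have Xu : X \in unitmx by rewrite unitmx_inv row_ebase_unit.
have rX : r *m X = col_ebase r *m pid_mx (\rank r).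
  by rewrite /X -{1}(mulmx_ebase r) mulmxK // row_ebase_unit.
pose v' := v *m X.
suff : (wv v')^T *m w = 0.
  rewrite scl => /eqP; rewrite scaler_eq0 => /orP [dX|/eqP -> //].
  by move: Xu; rewrite unitmxE unitfE dX.
pose v0 : 'cV[F]_n := lsubmx (v' : 'M_(n, 1 + d')).
pose V' : 'M[F]_(n, d') := rsubmx (v' : 'M_(n, 1 + d')).
have ev' : v' = row_mx v0 V' by rewrite hsubmxK.
have hV' : a^T *m V' = 0.
  have : a^T *m v' = col_ebase r *m pid_mx (\rank r) by rewrite /v' mulmxA rX.
  rewrite ev' (mul_mx_row a^T v0 V') => /(congr1 (@rsubmx _ 1 1 d')); rewrite row_mxKr => ->.
  apply/matrixP => i j; rewrite !mxE big1 // => l _; rewrite !mxE (ord1 l) /=.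
  by rewrite mulr0n mulr0.
have ah : (a^T *m h) 0 0 != 0 by rewrite tr11.
pose t := (a^T *m v0) 0 0 / (a^T *m h) 0 0.
have ev0 : v0 = t *: h + (v0 - t *: h) by rewrite addrC subrK.
rewrite ev' ev0 wv_lin raddfD /= linearZ /= mulmxDl -scalemxAl.
rewrite [X in _ + X]step1 ?addr0; last first.
  rewrite (mul_mx_row a^T (v0 - t *: h) V') hV' mulmxBr -scalemxAr.
  rewrite {1}[a^T *m v0]mx11_scalar {1}[a^T *m h]mx11_scalar scale_scalar_mx.
  by rewrite divfK // subrr row_mx0.
set u1 := row_mx h V'.
pose mu := 1 + (b^T *m h) 0 0.
pose Y : 'M[F]_(1 + d') := block_mx (mu%:M : 'M_1) (b^T *m V') 0 1%:M.
have hBu : B^T *m u1 = u1 *m Y.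
  rewrite /B raddfD /= trmx1 trmx_mul trmxK mulmxDl mul1mx -mulmxA.
  rewrite /u1 (mul_mx_row b^T h V') (mul_mx_row h _ _) (mul_row_block h V')  add_row_mx !mulmx0 !mulmx1 !addr0.
  congr row_mx; last by rewrite addrC.
  rewrite mul_mx_scalar {1}[b^T *m h]mx11_scalar mul_mx_scalar.
  by rewrite /mu scalerDl scale1r.
have := step2 u1; rewrite hBu scl /Y (det_ublock (mu%:M : 'M_1)) det_scalar1 det1 mulr1.
move/eqP; rewrite -subr_eq0 -{2}(scale1r ((wv u1)^T *m w)) -scalerBl scaler_eq0.
rewrite /mu addrC addKr tr11 (negPf hb) /= => /eqP ->.
by rewrite scaler0.
Qed.


Lemma key_yes (a g b h : 'cV[F]_n) :
  (d' < n')%N -> (g^T *m a) 0 0 != 0 -> h^T *m a = 0 ->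
  Pprop (E (1%:M + a *m g^T)) (E (1%:M + b *m h^T)).
Proof.
set A := 1%:M + a *m g^T; set B := 1%:M + b *m h^T.
move=> hdn hg ha.
pose K := kermx (row_mx g h).
have rK : (d' <= \rank K)%N.
  rewrite mxrank_ker; have := rank_leq_col (row_mx g h); lia.
pose Ct : 'M[F]_(d', n) := pid_mx d' *m row_base K.
have CtK : (Ct <= K)%MS.
  by rewrite /Ct (submx_trans (submxMl _ _)) // eq_row_base.
have Cfree : row_free Ct.
  by rewrite /row_free /Ct mxrankMfree ?row_base_free // rank_pid_mx.
have [Dm hD] := row_freeP Cfree.
have hC0 : Ct *m row_mx g h = 0 by apply/sub_kermxP.
have [Cg Ch] : Ct *m g = 0 /\ Ct *m h = 0.
  by move: hC0; rewrite mul_mx_row -row_mx0 => /eq_row_mx.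
pose C := Ct^T.
have gC : g^T *m C = 0 by rewrite /C -trmx_mul Cg trmx0.
have hC : h^T *m C = 0 by rewrite /C -trmx_mul Ch trmx0.
pose v : 'M[F]_(n, 1 + d') := row_mx a C.
pose lam := 1 + (g^T *m a) 0 0.
have hAv : A *m v = v *m block_mx (lam%:M : 'M_1) 0 0 1%:M.
  rewrite /A mulmxDl mul1mx -mulmxA /v (mul_mx_row g^T a C) gC (mul_mx_row a _ _).
  rewrite (mul_row_block a C) add_row_mx !mulmx0 !mulmx1 !addr0 add0r.
  congr row_mx.
  rewrite mul_mx_scalar {1}[g^T *m a]mx11_scalar mul_mx_scalar.
  by rewrite /lam scalerDl scale1r.
have hBv : B *m v = v.
  rewrite /B mulmxDl mul1mx -mulmxA /v (mul_mx_row h^T a C) ha hC row_mx0.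
  by rewrite mulmx0 addr0.
exists (wv v); split; [|split].
- apply/eqP => w0.
  have := wv_pair (row_mx g Dm : 'M_(n, 1 + d')) v; rewrite w0 mulmx0.
  move/(congr1 (fun M : 'M[F]_1 => M 0 0)); rewrite !mxE eqxx mulr1n.
  rewrite (tr_row_mx g Dm) /v (mul_col_row g^T Dm^T a C) gC (det_lblock (g^T *m a)).
  rewrite -trmx_mul hD trmx1 det1 mulr1 det_mx11 => /esym/eqP.
  by rewrite (negPf hg).
- exists ((lam - 1)^-1 *: wv v).
  rewrite -scalemxAr mulmxBl mul1mx E_wv hAv wv_mulr.
  rewrite (det_ublock (lam%:M : 'M_1)) det_scalar1 det1 mulr1.
  rewrite -[X in lam *: _ - X]scale1r -scalerBl scalerA mulVf ?scale1r //.
  by rewrite /lam addrC addKr.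
- by rewrite E_wv hBv.
Qed.

End Key.


Lemma pair_char (F : fieldType) n' d' (Ai Aj : 'M[F]_n'.+1) (ai aj : 'cV[F]_n'.+1)
  (li lj x : F) :
  is_reflection Ai -> is_reflection_vector Ai ai -> Ai *m ai = li *: ai ->
  is_reflection Aj -> is_reflection_vector Aj aj -> Aj *m aj = lj *: aj ->
  Aj *m ai = ai + x *: aj -> (d' < n')%N ->
  (x = 0 <-> Pprop (exterior_power d'.+1 Ai) (exterior_power d'.+1 Aj)).
Proof.
move=> rAi rai hli rAj raj hlj hx hdn.
have [gi [eAi [gai li1]]] := refl_data rAi rai hli.
have [gj [eAj [gaj lj1]]] := refl_data rAj raj hlj.
have ajnz : aj != 0 by case: raj.
have ex : (gj^T *m ai) 0 0 = x.
  move: hx; rewrite {1}eAj mulmxDl mul1mx -mulmxA {1}[gj^T *m ai]mx11_scalar.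
  rewrite mul_mx_scalar => /addrI /eqP; rewrite -subr_eq0 -scalerBl scaler_eq0.
  by rewrite (negPf ajnz) orbF subr_eq0 => /eqP.
rewrite eAi eAj; split.
- move=> x0; apply: key_yes => //.
  + by rewrite gai subr_eq0.
  + by rewrite [gj^T *m ai]mx11_scalar ex x0 raddf0.
- move=> P; apply/eqP; apply: contraT => xnz; exfalso.
  apply: (key_no (a := ai) (g := gi) (b := aj) (h := gj)) P.
  + by rewrite gaj subr_eq0.
  + by rewrite ex.
Qed.

Unset Implicit Arguments.

Theorem corollary5p10
  (F : fieldType) (hchar : [pchar F] =i pred0)
  (W : groupType) (k : nat) (s : 'I_k -> W) (hgen : generates s)
  (n : nat)
  (rho1 rho2 : W -> 'M[F]_n)
  (hrep1 : is_rep rho1) (hrep2 : is_rep rho2)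
  (hirr1 : irreducible_rep rho1) (hirr2 : irreducible_rep rho2)
  (hrefl1 : forall i, is_reflection (rho1 (s i)))
  (hrefl2 : forall i, is_reflection (rho2 (s i)))
  (alpha beta : 'I_k -> 'cV[F]_n) (lambda mu : 'I_k -> F)
  (halpha : forall i, is_reflection_vector (rho1 (s i)) (alpha i))
  (hbeta : forall i, is_reflection_vector (rho2 (s i)) (beta i))
  (hlambda : forall i, rho1 (s i) *m alpha i = lambda i *: alpha i)
  (hmu : forall i, rho2 (s i) *m beta i = mu i *: beta i)
  (d : nat) (hd1 : (1 <= d)%N) (hd2 : (d <= n - 1)%N)
  (psi : 'M[F]_(wdim n d)) (hpsi_inv : psi \in unitmx)
  (hpsi_W : forall g : W,
      psi *m exterior_power d (rho1 g) = exterior_power d (rho2 g) *m psi)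
  (x y : 'I_k -> 'I_k -> F)
  (hx : forall a b, a != b ->
      rho1 (s b) *m alpha a = alpha a + x a b *: alpha b)
  (hy : forall a b, a != b ->
      rho2 (s b) *m beta a = beta a + y a b *: beta b) :
  forall i j : 'I_k, i != j ->
    (x i j = 0 <-> y i j = 0) /\
    (rho1 (s j) *m alpha i != alpha i <-> rho2 (s j) *m beta i != beta i).
Proof.
move=> i j nij.
have [n' en] : exists n', n = n'.+1 by exists n.-1; lia.
subst n.
have [d' ed] : exists d', d = d'.+1 by exists d.-1; lia.
subst d.
have hdn : (d' < n')%N by lia.
have e1 := pair_char (hrefl1 i) (halpha i) (hlambda i) (hrefl1 j) (halpha j)
  (hlambda j) (hx _ _ nij) hdn.
have e2 := pair_char (hrefl2 i) (hbeta i) (hmu i) (hrefl2 j) (hbeta j)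
  (hmu j) (hy _ _ nij) hdn.
have P12 : Pprop (exterior_power d'.+1 (rho1 (s i))) (exterior_power d'.+1 (rho1 (s j))) <->
           Pprop (exterior_power d'.+1 (rho2 (s i))) (exterior_power d'.+1 (rho2 (s j))).
  split; [apply: (Pprop_transport hpsi_inv) | apply: (@Pprop_transport _ _ (invmx psi))].
  - exact: hpsi_W.
  - exact: hpsi_W.
  - by rewrite unitmx_inv.
  - exact: inv_intertwine (hpsi_W _).
  - exact: inv_intertwine (hpsi_W _).
have first : x i j = 0 <-> y i j = 0.
  split => h.
  - by apply/e2; apply/P12; apply/e1.
  - by apply/e1; apply/P12; apply/e2.
split => //.
have ajnz : alpha j != 0 by case: (halpha j).
have bjnz : beta j != 0 by case: (hbeta j).
rewrite (hx _ _ nij) (hy _ _ nij) -{2}[alpha i]addr0 -{2}[beta i]addr0.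
rewrite !(inj_eq (addrI _)) !scaler_eq0 (negPf ajnz) (negPf bjnz) !orbF.
split => /eqP h; apply/eqP => h'; apply: h; by apply first.
Qed.
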